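(* Let $p$ be a probability measure on $\mathbb{R}^d$ with $M:=\int_{\mathbb{R}^d}\|x\|^2\,p(dx)<\infty$, and let $(p_t)_{t\ge0}$ be the laws of the Ornstein--Uhlenbeck process $dX_t=-X_t\,dt+\sqrt2\,dB_t$, $X_0\sim p$. Then for $0<\tau<\frac{d}{M^2}$, $W_2(p,p_\tau)\le\sqrt{3\tau d}$.
   Context: $W_2$ denotes the 2-Wasserstein distance. *)

(* Defs.v *)
(* R^d is modelled as d.-tuple R with the product
   (coordinate) sigma-algebra provided by mathcomp-analysis, i.e. the Borel
   sigma-algebra of R^d. *)
From HB Require Import structures.
From mathcomp Require Import all_boot all_order all_algebra.
From mathcomp Require Import all_classical all_reals all_analysis.
Set Implicit Arguments. Unset Strict Implicit. Unset Printing Implicit Defensive.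
Import Order.TTheory GRing.Theory Num.Theory.
Local Open Scope classical_set_scope.
Local Open Scope ring_scope.

Section defs.
Context {R : realType}.

Definition sqnorm (d : nat) (x : d.-tuple R) : R :=
  \sum_(i < d) (tnth x i) ^+ 2.

Definition sqdist (d : nat) (x y : d.-tuple R) : R :=
  \sum_(i < d) (tnth x i - tnth y i) ^+ 2.

(* standard Gaussian N(0, I_d) on R^d, built as the d-fold product of the
   library's standard normal law normal_prob 0 1 (mean 0, std. dev. 1) *)
Fixpoint std_gauss (d : nat) : set (d.-tuple R) -> \bar R :=
  match d with
  | 0 => fun A => if `[< A [tuple] >] then 1%E else 0%E
  | n.+1 => fun A =>
      (\int[normal_prob (0 : R) 1]_x @std_gauss n [set t | A (cons_tuple (x : R) t)])%E
  end.

(* law of the Ornstein--Uhlenbeck process dX = -X dt + sqrt 2 dB at time t,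
   started from X_0 ~ p:  X_t = e^{-t} X_0 + sqrt(1 - e^{-2t}) Z,
   Z ~ N(0, I_d) independent of X_0, i.e.
   p_t(A) = \int p(dx) N(e^{-t} x, (1 - e^{-2t}) I_d)(A). *)
Definition ou_point (d : nat) (t : R) (x z : d.-tuple R) : d.-tuple R :=
  [tuple expR (- t) * tnth x i + Num.sqrt (1 - expR (- (2 * t))) * tnth z i
   | i < d].

Definition ou_law (d : nat) (p : set (d.-tuple R) -> \bar R) (t : R)
  : set (d.-tuple R) -> \bar R :=
  fun A => (\int[p]_x @std_gauss d [set z | A (ou_point t x z)])%E.

Definition coupling (d : nat) (p q : set (d.-tuple R) -> \bar R)
  (pi : probability (d.-tuple R * d.-tuple R)%type R) : Prop :=
  (forall A, measurable A -> pi (fst @^-1` A) = p A) /\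
  (forall A, measurable A -> pi (snd @^-1` A) = q A).

Definition W2sq (d : nat) (p q : set (d.-tuple R) -> \bar R) : \bar R :=
  ereal_inf [set c | exists pi, coupling p q pi /\
                     c = (\int[pi]_z (sqdist z.1 z.2)%:E)%E].

Definition W2 (d : nat) (p q : set (d.-tuple R) -> \bar R) : \bar R :=
  match W2sq p q with
  | EFin c => (Num.sqrt c)%:E
  | +oo%E => +oo%E
  | -oo%E => -oo%E
  end.

End defs.

(* Main.v *)
Require Import Defs.
From HB Require Import structures.
From mathcomp Require Import all_boot all_order all_algebra.
From mathcomp Require Import all_classical all_reals all_analysis.
From mathcomp Require Import measurable_realfun.
From mathcomp Require Import ring lra.
Set Implicit Arguments. Unset Strict Implicit. Unset Printing Implicit Defensive.
Import Order.TTheory GRing.Theory Num.Theory.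
Local Open Scope classical_set_scope.
Local Open Scope ring_scope.
Import numFieldTopology.Exports.
From mathcomp Require Import normal_distribution.

Section PF.
Context {R : realType} d1 d2 (T1 : measurableType d1) (T2 : measurableType d2).
Variables (m : probability T1 R) (f : T1 -> T2) (mf : measurable_fun setT f).
Definition pfun (_ : measurable_fun setT f) : set T2 -> \bar R := pushforward m f.
Local Notation pf := (pfun mf).
Let pf0 : pf set0 = 0%E.
Proof. by rewrite /pfun /pushforward preimage_set0 measure0. Qed.
Let pf_ge0 A : (0 <= pf A)%E.
Proof. exact: measure_ge0. Qed.
Let pf_sa : semi_sigma_additive pf.
Proof.
move=> F mF tF mUF; rewrite /pfun /pushforward preimage_bigcup.
apply: measure_semi_sigma_additive.
- by move=> n; rewrite -[X in measurable X]setTI; exact: mf.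
- apply/trivIsetP => /= i j _ _ ij; rewrite -preimage_setI.
  by move/trivIsetP : tF => /(_ _ _ _ _ ij) ->//; rewrite preimage_set0.
- by rewrite -preimage_bigcup -[X in measurable X]setTI; exact: mf.
Qed.
HB.instance Definition _ := isMeasure.Build _ _ _ pf pf0 pf_ge0 pf_sa.
Let pfT : pf setT = 1%E.
Proof. by rewrite /pfun /pushforward preimage_setT probability_setT. Qed.
HB.instance Definition _ := Measure_isProbability.Build _ _ _ pf pfT.
End PF.

Section G.
Context {R : realType}.
Definition consf n : (measurableTypeR R * n.-tuple R)%type -> n.+1.-tuple R := fun xt => [tuple of xt.1 :: xt.2].
Lemma mconsf n : measurable_fun setT (@consf n).
Proof. exact: measurable_cons. Qed.

Section PP.
Context d1 d2 (T1 : measurableType d1) (T2 : measurableType d2)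
  (m1 : probability T1 R) (m2 : probability T2 R).
Definition prodm := (m1 \x m2)%E.
HB.instance Definition _ := Measure.on prodm.
Let prodT : prodm setT = 1%E.
Proof. rewrite /prodm -setXTT product_measure1E//. rewrite -[RHS]mule1; congr (_ * _)%E; exact: probability_setT. Qed.
HB.instance Definition _ := Measure_isProbability.Build _ _ _ prodm prodT.
End PP.
Definition prodp d1 d2 (T1 : measurableType d1) (T2 : measurableType d2)
  (m1 : probability T1 R) (m2 : probability T2 R) : probability (T1 * T2)%type R := prodm m1 m2.

Fixpoint gp n : probability (n.-tuple R) R :=
  match n return probability (n.-tuple R) R with
  | 0 => @dirac _ _ ([tuple] : 0.-tuple R) R
  | n'.+1 => pfun (prodp (normal_prob (0:R) 1) (gp n')) (@mconsf n')
  end.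
End G.
Section GE.
Context {R : realType}.
Lemma gpE n (A : set (n.-tuple R)) : gp n A = std_gauss A.
Proof.
elim: n A => [|n IH] A /=.
  rewrite /dirac indicE; case: (asboolP (A [tuple])) => h.
    by rewrite mem_set.
  by rewrite memNset.
rewrite /pfun /pushforward /prodp /prodm /product_measure1.
apply: eq_integral => x _ /=; rewrite IH; congr (std_gauss _).
apply/seteqP; split => t /=; rewrite /xsection /= inE /consf /=.
  by congr A; apply: val_inj.
by move=> h; congr A: h; apply: val_inj.
Qed.
End GE.
Section Marg.
Context {R : realType}.
Local Open Scope ereal_scope.
Notation G := (normal_prob (0:R) 1).

Lemma gp_int_cons n (f : n.+1.-tuple R -> \bar R) :
  measurable_fun setT f -> (forall x, 0 <= f x) ->
  \int[gp n.+1]_z f z = \int[G]_x \int[gp n]_t f [tuple of x :: t].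
Proof.
move=> mf f0 /=.
rewrite /pfun ge0_integral_pushforward//; last by apply: mconsf.
rewrite preimage_setT.
rewrite /prodp /prodm fubini_tonelli1 //.
  apply: measurableT_comp => //; exact: mconsf.
by move=> ?; exact: f0.
Qed.
End Marg.
Section Marg2.
Context {R : realType}.
Local Open Scope ereal_scope.
Notation G := (normal_prob (0:R) 1).

Lemma int_cstP d (T : measurableType d) (P : probability T R) (c : \bar R) :
  \int[P]_x c = c.
Proof.
rewrite (integral_cst P (@measurableT _ T) c) -[RHS]mule1.
congr (_ * _); exact: probability_setT.
Qed.

Lemma gp_marg n (i : 'I_n) (h : R -> \bar R) :
  measurable_fun setT h -> (forall x, 0 <= h x) ->
  \int[gp n]_z h (tnth z i) = \int[G]_w h w.
Proof.
move=> mh h0; elim: n i => [[]//|n IH] i.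
rewrite gp_int_cons //; last first.
  apply: measurableT_comp => //; exact: measurable_tnth.
have [->|i0] := eqVneq i ord0.
  apply: eq_integral => x _ /=.
  under eq_integral do rewrite (_ : tnth _ _ = x)//.
  exact: int_cstP.
have i1n : (i.-1 < n)%N by rewrite prednK ?lt0n// -ltnS.
pose j := Ordinal i1n.
have -> : i = lift ord0 j.
  by apply/val_inj => /=; rewrite /bump/= add1n prednK// lt0n.
under eq_integral do under eq_integral do rewrite tnthS.
under eq_integral do rewrite IH.
exact: int_cstP.
Qed.
End Marg2.

Section V.
Context {R : realType}.
Local Open Scope ereal_scope.
Notation mu := (@lebesgue_measure R).
Lemma pdfE (s x : R) : (0 < s)%R ->
  (normal_pdf 0 s x = s^-1 * normal_peak 1 * expR (- x ^+ 2 / 2) * expR ((1 - s ^- 2) / 2 * x ^+ 2))%R.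
Proof.
move=> s0.
rewrite /normal_pdf gt_eqF //. rewrite /normal_peak /normal_fun. rewrite subr0 expr1n mul1r -mulrnAr sqrtrM ?sqr_ge0// sqrtr_sqr ger0_norm ?ltW//.
rewrite invfM -!mulrA -expRD; congr (_ * (_ * expR _))%R.
have sn0 : s != 0%R by rewrite gt_eqF.
rewrite -mulr_natr; field; exact: sn0.
Qed.
End V.
Section V2.
Context {R : realType}.
Local Open Scope ereal_scope.
Notation mu := (@lebesgue_measure R).

Lemma pdf1E (x : R) : normal_pdf 0 1 x = (normal_peak 1 * expR (- x ^+ 2 / 2))%R.
Proof.
rewrite pdfE ?ltr01// invr1 mul1r expr1n invr1 subrr mul0r mul0r expR0 mulr1.
by [].
Qed.

Lemma mpdf (m s : R) : measurable_fun [set: R] (normal_pdf m s).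
Proof. exact: measurable_normal_pdf. Qed.

Lemma key_ineq (s : R) : (1 < s)%R ->
  (s^-1)%:E + ((1 - s ^- 2) / 2 / s)%:E *
     \int[mu]_x ((x ^+ 2 * normal_pdf 0 1 x)%:E) <= 1.
Proof.
move=> s1; have s0 : (0 < s)%R by apply: lt_trans s1.
have c0 : (0 <= (1 - s ^- 2) / 2 / s)%R.
  apply: divr_ge0; last exact: ltW.
  apply: divr_ge0 => //; rewrite subr_ge0 invf_le1 ?exprn_gt0//.
  by rewrite -[leLHS](expr1n _ 2) lerXn2r ?nnegrE ?ltW.
rewrite -(integral_normal_pdf 0 s).
rewrite -[X in X + _](mule1 (s^-1)%:E) -(integral_normal_pdf 0 1).
rewrite -ge0_integralZl//; last 3 first.
  by apply: measurableT_comp => //; exact: mpdf.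
  by move=> x _; rewrite lee_fin normal_pdf_ge0.
  by rewrite lee_fin invr_ge0 ltW.
rewrite -ge0_integralZl//; last 2 first.
  by apply: measurableT_comp => //; apply: measurable_funM => //; try exact: mpdf; exact: measurable_funX.
  by move=> x _; rewrite lee_fin mulr_ge0 ?sqr_ge0 ?normal_pdf_ge0.
rewrite -ge0_integralD//; last 4 first.
  by move=> x _; rewrite mule_ge0// lee_fin ?normal_pdf_ge0 ?invr_ge0 ?ltW.
  by apply: emeasurable_funM => //; apply: measurableT_comp => //; exact: mpdf.
  by move=> x _; rewrite mule_ge0// lee_fin mulr_ge0 ?sqr_ge0 ?normal_pdf_ge0.
  by apply: emeasurable_funM => //; apply: measurableT_comp => //; apply: measurable_funM => //; try exact: mpdf; exact: measurable_funX.
apply: ge0_le_integral => //.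
- move=> x _; rewrite -!EFinM -EFinD lee_fin; apply: addr_ge0; apply: mulr_ge0 => //; rewrite ?invr_ge0 ?(ltW s0) ?normal_pdf_ge0 //; apply: mulr_ge0; [exact: sqr_ge0 | exact: normal_pdf_ge0].
- apply: emeasurable_funD; apply: emeasurable_funM => //; apply: measurableT_comp => //; try apply: measurable_funM => //; try exact: mpdf; exact: measurable_funX.
- by apply: measurableT_comp => //; exact: mpdf.
move=> x _; rewrite -EFinM -EFinM -EFinD lee_fin.
rewrite (pdfE x s0) pdf1E.
have e0 : (0 <= s^-1 * normal_peak 1 * expR (- x ^+ 2 / 2))%R.
  by rewrite mulr_ge0 ?expR_ge0 // mulr_ge0 ?normal_peak_ge0 // invr_ge0 ltW.
have := expR_ge1Dx ((1 - s ^- 2) / 2 * x ^+ 2).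
move=> /(ler_wpM2l e0).
apply: le_trans; rewrite le_eqVlt; apply/orP; left; apply/eqP.
field; by rewrite gt_eqF.
Qed.
End V2.
Section V3.
Context {R : realType}.
Local Open Scope ereal_scope.
Notation mu := (@lebesgue_measure R).
Lemma arith (s v : R) : (1 < v)%R -> (s = 1 + (v - 1) / 4)%R ->
  (s^-1 + (1 - s ^- 2) / 2 / s * v <= 1)%R -> False.
Proof.
move=> v1 sE h.
have s1 : (1 < s)%R by rewrite sE; lra.
have s0 : (0 < s)%R by lra.
have E : ((s^-1 + (1 - s ^- 2) / 2 / s * v) * (2 * s ^+ 3) = 2 * s ^+ 2 + (s ^+ 2 - 1) * v)%R.
  by field; rewrite gt_eqF.
have p : (0 < 2 * s ^+ 3)%R by rewrite mulr_gt0 // exprn_gt0.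
have := h; rewrite -(ler_pM2r p) E mul1r => h3.
have h4 : ((s + 1) * v <= 2 * s ^+ 2)%R by nra.
rewrite sE in h4; nra.
Qed.
End V3.
Section V4.
Context {R : realType}.
Local Open Scope ereal_scope.
Notation mu := (@lebesgue_measure R).
Lemma V_le1 : \int[mu]_x ((x ^+ 2 * normal_pdf 0 1 x)%:E) <= 1.
Proof.
have V0 : 0 <= \int[mu]_x ((x ^+ 2 * normal_pdf 0 1 x)%:E).
  by apply: integral_ge0 => x _; rewrite lee_fin mulr_ge0 ?sqr_ge0 ?normal_pdf_ge0.
have K := @key_ineq R.
move: V0 K; case: (\int[mu]_x _) => [v| |] // _ K.
- rewrite lee_fin leNgt; apply/negP => v1.
  have s1 : (1 < 1 + (v - 1) / 4)%R by lra.
  have := K _ s1; rewrite -EFinM -EFinD lee_fin => h.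
  exact: (arith v1 erefl h).
- have s1 : (1 < 2 :> R)%R by lra.
  have := K _ s1; rewrite gt0_muley ?lte_fin; last first.
    apply: divr_gt0; last lra.
    apply: divr_gt0; last lra.
    rewrite subr_gt0 invf_lt1 ?exprn_gt0//; lra.
  by rewrite addey.
Qed.
End V4.
Section Refl.
Context {R : realType}.
Local Open Scope ereal_scope.
Notation mu := (@lebesgue_measure R).

Lemma split_int (k : R -> R) : (forall x, 0 <= k x)%R -> continuous k ->
  \int[mu]_x (k x)%:E = \int[mu]_(x in `[0%R, +oo[) ((k \o -%R) x)%:E
                       + \int[mu]_(x in `[0%R, +oo[) (k x)%:E.
Proof.
move=> k0 ck.
have mk : measurable_fun [set: R] k by exact: continuous_measurable_fun.
have mposnums : measurable [set x : R | 0 <= x]%R by rewrite -set_itvcy.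
rewrite -(setUv [set x : R | 0 <= x]%R) ge0_integral_setU//= ; last 4 first.
  exact: measurableC.
  by apply/measurable_EFinP; rewrite setUv.
  by move=> x _; rewrite lee_fin.
  exact/disj_setPCl.
rewrite addeC -set_itvcy; congr (_ + _).
rewrite setCitvr.
rewrite integral_itv_bndo_bndc; last exact/measurable_EFinP/measurable_funTS.
rewrite -{1}oppr0 ge0_integration_by_substitutionNy//.
exact: continuous_subspaceT.
Qed.

Lemma refl_int (k : R -> R) : (forall x, 0 <= k x)%R -> continuous k ->
  \int[mu]_x (k (- x)%R)%:E = \int[mu]_x (k x)%:E.
Proof.
move=> k0 ck.
have ck' : continuous (k \o -%R).
  move=> x; apply: continuous_comp; [exact: continuousN | exact: ck].
rewrite (split_int (k := k \o -%R)) //= split_int // addeC; congr (_ + _).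
by apply: eq_integral => x _ /=; rewrite opprK.
Qed.
End Refl.
Section Dens.
Context {R : realType}.
Local Open Scope ereal_scope.
Notation G := (normal_prob (0:R) 1).
Notation mu := (@lebesgue_measure R).

Lemma normal_dens (f : R -> \bar R) : measurable_fun setT f -> (forall x, 0 <= f x) ->
  \int[G]_x f x = \int[mu]_x (f x * (normal_pdf 0 1 x)%:E).
Proof.
move=> mf f0.
have dom := normal_prob_dominates (0:R) 1.
rewrite -(Radon_Nikodym_SigmaFinite.change_of_variables dom) //.
apply: ae_eq_integral => //.
- apply: emeasurable_funM => //.
  exact: (measurable_int _ (Radon_Nikodym_SigmaFinite.f_integrable dom)).
- apply: emeasurable_funM => //.
  by apply/measurable_EFinP; exact: measurable_normal_pdf.
- apply: ae_eqe_mul2l.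
  apply: integral_ae_eq => //.
  + exact: Radon_Nikodym_SigmaFinite.f_integrable.
  + by apply/measurable_EFinP; exact: measurable_normal_pdf.
  + move=> E _ mE; rewrite -Radon_Nikodym_SigmaFinite.f_integral//.
Qed.
End Dens.
Section GSQ.
Context {R : realType}.
Local Open Scope ereal_scope.
Notation mu := (@lebesgue_measure R).
Notation G := (normal_prob (0:R) 1).

Lemma cont_sq (c b : R) : continuous (fun x : R => (c - b * x) ^+ 2)%R.
Proof.
move=> x.
apply: (@continuous_comp _ _ _ (fun x : R => c - b * x)%R (fun y : R => y ^+ 2)%R).
  apply: continuousB; first exact: cst_continuous.
  exact: mulrl_continuous.
exact: exprn_continuous.
Qed.

Lemma msqB (c b : R) : measurable_fun setT (fun x : R => (c - b * x) ^+ 2)%R.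
Proof. apply: (@measurable_funX _ _ _ _ (fun x : R => c - b * x)%R 2); apply: measurable_funB => //; exact: measurable_funM. Qed.
Lemma msqD (c b : R) : measurable_fun setT (fun x : R => (c + b * x) ^+ 2)%R.
Proof. apply: (@measurable_funX _ _ _ _ (fun x : R => c + b * x)%R 2); apply: measurable_funD => //; exact: measurable_funM. Qed.

Lemma pdfN (x : R) : normal_pdf 0 1 (- x) = normal_pdf 0 1 x.
Proof. by rewrite !pdf1E sqrrN. Qed.

Lemma G_sym (c b : R) :
  \int[G]_w ((c - b * w) ^+ 2)%:E = \int[G]_w ((c + b * w) ^+ 2)%:E.
Proof.
have ck : continuous (fun x => (c - b * x) ^+ 2 * normal_pdf 0 1 x)%R.
  move=> x.
  apply: (@continuousM R R (fun x : R => (c - b * x) ^+ 2)%R (normal_pdf 0 1) x).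
    exact: cont_sq.
  by apply: continuous_normal_pdf; rewrite oner_eq0.
rewrite !normal_dens//; last 4 first.
- by apply: measurableT_comp => //; exact: msqD.
- by move=> x; rewrite lee_fin sqr_ge0.
- by apply: measurableT_comp => //; exact: msqB.
- by move=> x; rewrite lee_fin sqr_ge0.
under eq_integral do rewrite -EFinM.
under [RHS]eq_integral do rewrite -EFinM.
rewrite -refl_int//; last by move=> x; rewrite mulr_ge0 ?sqr_ge0 ?normal_pdf_ge0.
by apply: eq_integral => x _; rewrite pdfN mulrN opprK.
Qed.
End GSQ.
Section GSQ2.
Context {R : realType}.
Local Open Scope ereal_scope.
Notation mu := (@lebesgue_measure R).
Notation G := (normal_prob (0:R) 1).

Lemma G_w2 : \int[G]_w ((w ^+ 2)%:E) <= 1.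
Proof.
rewrite normal_dens//; last 2 first.
  by apply: measurableT_comp => //; exact: measurable_funX.
  by move=> x; rewrite lee_fin sqr_ge0.
under eq_integral do rewrite -EFinM.
exact: V_le1.
Qed.

Lemma G_sq (c b : R) : \int[G]_w ((c - b * w) ^+ 2)%:E <= (c ^+ 2 + b ^+ 2)%:E.
Proof.
set F := \int[G]_w _.
have F0 : 0 <= F by apply: integral_ge0 => x _; rewrite lee_fin sqr_ge0.
have H : F + F = (2 * c ^+ 2)%:E + (2 * b ^+ 2)%:E * \int[G]_w ((w ^+ 2)%:E).
  rewrite {2}/F G_sym /F -ge0_integralD//; last 4 first.
  - by move=> x _; rewrite lee_fin sqr_ge0.
  - by apply: measurableT_comp => //; exact: msqB.
  - by move=> x _; rewrite lee_fin sqr_ge0.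
  - by apply: measurableT_comp => //; exact: msqD.
  rewrite -ge0_integralZl//; last 3 first.
  - by apply: measurableT_comp => //; exact: measurable_funX.
  - by move=> x _; rewrite lee_fin sqr_ge0.
  - by rewrite lee_fin; apply: mulr_ge0 => //; exact: sqr_ge0.
  rewrite -[X in X + _](int_cstP G) -ge0_integralD//; last 3 first.
  - by move=> x _; rewrite lee_fin; apply: mulr_ge0 => //; exact: sqr_ge0.
  - by move=> x _; rewrite -EFinM lee_fin; apply: mulr_ge0; [apply: mulr_ge0 => //; exact: sqr_ge0 | exact: sqr_ge0].
  - by apply: emeasurable_funM => //; apply: measurableT_comp => //; exact: measurable_funX.
  apply: eq_integral => x _; rewrite -EFinM -!EFinD; congr EFin; ring.
have H2 : F + F <= (2 * c ^+ 2 + 2 * b ^+ 2)%:E.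
  rewrite H EFinD leeD2l// -[leRHS]mule1.
  by apply: lee_wpmul2l; [rewrite lee_fin; apply: mulr_ge0 => //; exact: sqr_ge0| exact: G_w2].
clear H; clearbody F; move: F0 H2; case: F => [r| |]//.
rewrite -EFinD !lee_fin => r0 h; lra.
Qed.
End GSQ2.

Section Inner.
Context {R : realType}.
Local Open Scope ereal_scope.
Notation G := (normal_prob (0:R) 1).

Lemma inner_bound n (x : n.-tuple R) (al be : R) :
  \int[gp n]_z (\sum_(i < n) (tnth x i - (al * tnth x i + be * tnth z i)) ^+ 2)%:E
  <= ((1 - al) ^+ 2 * \sum_(i < n) tnth x i ^+ 2 + n%:R * be ^+ 2)%:E.
Proof.
under eq_integral do rewrite -sumEFin.
rewrite ge0_integral_sum//; last 2 first.
  move=> i; apply: measurableT_comp => //.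
  apply: (@measurable_funX _ _ _ _ (fun z : n.-tuple R => tnth x i - (al * tnth x i + be * tnth z i))%R 2).
  apply: measurable_funB => //; apply: measurable_funD => //; apply: measurable_funM => //.
  exact: measurable_tnth.
  by move=> i z _; rewrite lee_fin sqr_ge0.
have -> : ((1 - al) ^+ 2 * \sum_(i < n) tnth x i ^+ 2 + n%:R * be ^+ 2 =
   \sum_(i < n) (((1 - al) * tnth x i) ^+ 2 + be ^+ 2))%R.
  rewrite big_split /= sumr_const card_ord mulr_sumr -mulr_natl.
  congr (_ + _)%R.
    by apply: eq_bigr => i _; rewrite exprMn.
  by rewrite mulr1 mulr_natl.
have -> : ((\sum_(i < n) (((1 - al) * tnth x i) ^+ 2 + be ^+ 2))%R)%:E =
  \sum_(i < n) ((((1 - al) * tnth x i) ^+ 2 + be ^+ 2)%R)%:E by rewrite sumEFin.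
apply: lee_sum => i _.
apply: le_trans (G_sq ((1 - al) * tnth x i) be).
have := @gp_marg R n i (fun w => (((1 - al) * tnth x i - be * w) ^+ 2)%:E).
move=> /= <-; last 2 first.
  by apply: measurableT_comp => //; exact: msqB.
  by move=> w; rewrite lee_fin sqr_ge0.
rewrite le_eqVlt; apply/orP; left; apply/eqP.
by apply: eq_integral => z _; congr EFin; congr (_ ^+ 2)%R; ring.
Qed.
End Inner.

Section Coup.
Context {R : realType} (d : nat) (tau : R).
Local Open Scope ereal_scope.

Definition ouf (xz : d.-tuple R * d.-tuple R) : (d.-tuple R * d.-tuple R)%type :=
  (xz.1, ou_point tau xz.1 xz.2).

Lemma mou : measurable_fun setT (fun xz : d.-tuple R * d.-tuple R => ou_point tau xz.1 xz.2).
Proof.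
apply/measurable_fun_tnthP => i /=.
have -> : (tnth (T:=R))^~ i \o (fun xz : d.-tuple R * d.-tuple R => ou_point tau xz.1 xz.2) =
  (fun xz : d.-tuple R * d.-tuple R => expR (- tau) * tnth xz.1 i + Num.sqrt (1 - expR (- (2 * tau))) * tnth xz.2 i)%R.
  by apply/funext => xz /=; rewrite tnth_mktuple.
apply: (@measurable_funD _ _ _ setT
  (fun xz : d.-tuple R * d.-tuple R => expR (- tau) * tnth xz.1 i)%R
  (fun xz : d.-tuple R * d.-tuple R => Num.sqrt (1 - expR (- (2 * tau))) * tnth xz.2 i)%R).
  apply: (@measurable_funM _ _ _ setT (cst (expR (- tau)))
     (fun xz : d.-tuple R * d.-tuple R => tnth xz.1 i)) => //.
  apply: (@measurableT_comp _ _ _ _ _ _ (fun t : d.-tuple R => tnth t i)) => //; exact: measurable_tnth.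
apply: (@measurable_funM _ _ _ setT (cst (Num.sqrt (1 - expR (- (2 * tau)))))
     (fun xz : d.-tuple R * d.-tuple R => tnth xz.2 i)) => //.
apply: (@measurableT_comp _ _ _ _ _ _ (fun t : d.-tuple R => tnth t i)) => //; exact: measurable_tnth.
Qed.

Lemma mouf : measurable_fun setT ouf.
Proof. apply: measurable_fun_pair => //; exact: mou. Qed.

Variable p : probability (d.-tuple R) R.

Definition pi := pfun (prodp p (gp d)) mouf.

Lemma pi_coupling : coupling p (ou_law p tau) pi.
Proof.
split => A mA.
- rewrite /pi /pfun /pushforward /prodp /prodm.
  rewrite /=.
  have -> : ouf @^-1` (fst @^-1` A) = A `*` setT.
    by apply/seteqP; split => -[x z] //=; case.
  rewrite /prodm (product_measure1E p (gp d) mA measurableT) -[RHS]mule1.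
  congr (_ * _); exact: probability_setT.
- rewrite /pi /pfun /pushforward /prodp /prodm /product_measure1 /ou_law.
  apply: eq_integral => x _ /=; rewrite -gpE; congr (gp d _).
  by apply/seteqP; split => z /=; rewrite /xsection /= inE.
Qed.
End Coup.
Section Cost.
Context {R : realType}.
Local Open Scope ereal_scope.

Lemma msqnorm n : measurable_fun setT (@sqnorm R n).
Proof.
rewrite /sqnorm; apply: measurable_sum => i.
apply: (@measurable_funX _ _ _ _ (fun t : n.-tuple R => tnth t i) 2).
exact: measurable_tnth.
Qed.

Lemma msqdist n : measurable_fun setT (fun z : n.-tuple R * n.-tuple R => sqdist z.1 z.2).
Proof.
rewrite /sqdist; apply: measurable_sum => i.
apply: (@measurable_funX _ _ _ _ (fun z : n.-tuple R * n.-tuple R => tnth z.1 i - tnth z.2 i)%R 2).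
apply: (@measurable_funB _ _ _ setT (fun z : n.-tuple R * n.-tuple R => tnth z.1 i)
   (fun z : n.-tuple R * n.-tuple R => tnth z.2 i)).
  apply: (@measurableT_comp _ _ _ _ _ _ (fun t : n.-tuple R => tnth t i)) => //; exact: measurable_tnth.
apply: (@measurableT_comp _ _ _ _ _ _ (fun t : n.-tuple R => tnth t i)) => //; exact: measurable_tnth.
Qed.

Lemma sqnorm_ge0 n (x : n.-tuple R) : (0 <= sqnorm x)%R.
Proof. by apply: sumr_ge0 => i _; exact: sqr_ge0. Qed.
Lemma sqdist_ge0 n (x y : n.-tuple R) : (0 <= sqdist x y)%R.
Proof. by apply: sumr_ge0 => i _; exact: sqr_ge0. Qed.

Lemma pi_cost (d : nat) (tau : R) (p : probability (d.-tuple R) R) :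
  \int[p]_x (sqnorm x)%:E < +oo ->
  \int[pi tau p]_z (sqdist z.1 z.2)%:E <=
  ((1 - expR (- tau)) ^+ 2 * fine (\int[p]_x (sqnorm x)%:E)
    + d%:R * Num.sqrt (1 - expR (- (2 * tau))) ^+ 2)%:E.
Proof.
move=> Mfin.
have M0 : 0 <= \int[p]_x (sqnorm x)%:E.
  by apply: integral_ge0 => x _; rewrite lee_fin sqnorm_ge0.
rewrite /pi /pfun ge0_integral_pushforward//; last 2 first.
  by apply: measurableT_comp => //; exact: msqdist.
  by move=> z _; rewrite lee_fin sqdist_ge0.
rewrite preimage_setT /prodp /prodm fubini_tonelli1//; last 2 first.
  apply: (@measurableT_comp _ _ _ _ _ _ (fun z : d.-tuple R * d.-tuple R => (sqdist z.1 z.2)%:E) _ (@ouf R d tau)).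
    by apply: measurableT_comp => //; exact: msqdist.
  exact: mouf.
  by move=> z /=; rewrite lee_fin sqdist_ge0.
set a := expR (- tau); set b := Num.sqrt (1 - expR (- (2 * tau))).
apply: (@le_trans _ _ (\int[p]_x ((1 - a) ^+ 2 * sqnorm x + d%:R * b ^+ 2)%:E)).
  have mF : measurable_fun setT ((fun y : d.-tuple R * d.-tuple R => (sqdist y.1 y.2)%:E) \o ouf tau).
    apply: (@measurableT_comp _ _ _ _ _ _ (fun z : d.-tuple R * d.-tuple R => (sqdist z.1 z.2)%:E) _ (@ouf R d tau)).
      by apply: measurableT_comp => //; exact: msqdist.
    exact: mouf.
  apply: ge0_le_integral => //.
  - move=> x Hx; apply: integral_ge0 => z Hz; rewrite lee_fin; exact: sqdist_ge0.
  - apply: (measurable_fun_fubini_tonelli_F _ mF).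
    by move=> z /=; rewrite lee_fin sqdist_ge0.
  - apply: measurableT_comp => //; apply: measurable_funD => //.
    apply: measurable_funM => //; exact: msqnorm.
  move=> x Hx /=; rewrite /fubini_F /=.
  apply: le_trans (inner_bound x a b).
  rewrite le_eqVlt; apply/orP; left; apply/eqP.
  apply: eq_integral => z _ /=; congr EFin; rewrite /sqdist.
  by apply: eq_bigr => i _; rewrite tnth_mktuple.
have Mf : \int[p]_x (sqnorm x)%:E \is a fin_num.
  by rewrite ge0_fin_numE.
rewrite le_eqVlt; apply/orP; left; apply/eqP.
under eq_integral do rewrite EFinD EFinM.
rewrite ge0_integralD//; last 3 first.
- by move=> x _; rewrite mule_ge0// lee_fin ?sqr_ge0 ?sqnorm_ge0.
- by apply: emeasurable_funM => //; apply: measurableT_comp => //; exact: msqnorm.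
- by move=> x _; rewrite lee_fin mulr_ge0 ?sqr_ge0.
rewrite ge0_integralZl//; last 3 first.
- by apply: measurableT_comp => //; exact: msqnorm.
- by move=> x _; rewrite lee_fin sqnorm_ge0.
- by rewrite lee_fin sqr_ge0.
rewrite int_cstP EFinD; congr (_ + _).
  by rewrite (EFinM ((1 - a) ^+ 2)) fineK.
exact: mouf.
Qed.
End Cost.


Lemma real_ineq {R : realType} (tau M dd : R) : 1 <= dd -> 0 < tau -> 0 <= M -> tau * M ^+ 2 < dd ->
  (1 - expR (- tau)) ^+ 2 * M + dd * Num.sqrt (1 - expR (- (2 * tau))) ^+ 2 <= 3 * tau * dd.
Proof.
move=> dd1 t0 M0 h.
have e1 := expR_ge1Dx (- tau).
have e2 := expR_ge1Dx (- (2 * tau)).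
have a0 := expR_gt0 (- tau).
have a1 : expR (- tau) <= 1 by rewrite expR_le1 oppr_le0 ltW.
have b1 : expR (- (2 * tau)) <= 1 by rewrite expR_le1 oppr_le0 mulr_ge0 ?ltW.
rewrite sqr_sqrtr; last by rewrite subr_ge0.
have dd0 : 0 < dd by apply: le_lt_trans h; rewrite mulr_ge0 ?sqr_ge0 ?ltW.
set u := 1 - expR (- tau) in e1 a0 a1 *.
have u0 : 0 <= u by rewrite /u subr_ge0.
have u1 : u <= 1 by rewrite /u; lra.
have ut : u <= tau by rewrite /u; lra.
have H2 : dd * (1 - expR (- (2 * tau))) <= 2 * tau * dd.
  rewrite mulrC ler_pM2r //; lra.
suff H1 : u ^+ 2 * M <= tau * dd by lra.
have uu : u ^+ 2 <= tau ^+ 2.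
  by rewrite -subr_ge0 subr_sqr; apply: mulr_ge0; lra.
have [M1|M1] := leP M 1.
  have h1 : u ^+ 2 * M <= u ^+ 2 by rewrite ler_piMr ?sqr_ge0.
  have h2 : u ^+ 2 <= u by rewrite expr2 ler_piMr.
  have h3 : tau <= tau * dd by rewrite ler_peMr // ltW.
  lra.
have h1 : u ^+ 2 * M <= tau ^+ 2 * M by rewrite ler_wpM2r.
have h2 : M <= M ^+ 2 by rewrite expr2 ler_peMr // ltW.
have h3 : tau ^+ 2 * M <= tau ^+ 2 * M ^+ 2 by rewrite ler_wpM2l ?sqr_ge0.
have h4 : tau ^+ 2 * M ^+ 2 <= tau * dd.
  by rewrite expr2 -mulrA ler_wpM2l ?ltW // ltW.
lra.
Qed.

Unset Implicit Arguments.
Theorem lemma1 (R : realType) (d : nat)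
    (p : probability (d.-tuple R) R) (tau : R) :
  (\int[p]_x (sqnorm x)%:E < +oo)%E ->
  0 < tau ->
  tau * (fine (\int[p]_x (sqnorm x)%:E)) ^+ 2 < d%:R ->
  (W2 p (ou_law p tau) <= (Num.sqrt (3 * tau * d%:R))%:E)%E.
Proof.
move=> Mfin t0 h.
have M0 : 0 <= fine (\int[p]_x (sqnorm x)%:E).
  by apply: fine_ge0; apply: integral_ge0 => x _; rewrite lee_fin sqnorm_ge0.
have dd1 : 1 <= d%:R :> R.
  case: d p h Mfin M0 => [|d'] p h Mfin M0; last by rewrite ler1n.
  exfalso; move: h; rewrite ltNge => /negP; apply; rewrite mulr_ge0 ?sqr_ge0 ?ltW //.
have real := real_ineq dd1 t0 M0 h.
have cost := pi_cost tau Mfin.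
have Wle : (W2sq p (ou_law p tau) <= (3 * tau * d%:R)%:E)%E.
  rewrite /W2sq; apply: ge_ereal_inf.
  exists (\int[pi tau p]_z (sqdist z.1 z.2)%:E)%E.
    by exists (pi tau p); split => //; exact: pi_coupling.
  by apply: le_trans cost _; rewrite lee_fin.
have W0 : (0 <= W2sq p (ou_law p tau))%E.
  apply: le_ereal_inf_tmp => c [pi' [_ ->]].
  by apply: integral_ge0 => z _; rewrite lee_fin sqdist_ge0.
rewrite /W2; move: W0 Wle; case: (W2sq _ _) => [w| |] //= w0 wle.
by rewrite lee_fin ler_wsqrtr // -lee_fin.
Qed.
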